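(* Let $K$ be an integral domain (not necessarily Noetherian) and $X$ a set. No proper non-zero ideal $I$ of the free $K$-algebra $K\langle X\rangle$ is free as a $K$-algebra, i.e. there is no set $Y$ with $I\cong K\langle Y\rangle$ as $K$-algebras.
   Context: The free $K$-algebra $K\langle X\rangle$ is the semigroup ring over $K$ of the free semigroup $X^+$ (polynomials in non-commuting variables without constant term; no identity). Integral domains are commutative with $1$. *)

(* Defs.v *)
From Stdlib Require List.
From HB Require Import structures.
From mathcomp Require Import all_boot all_order all_algebra.
Set Implicit Arguments. Unset Strict Implicit. Unset Printing Implicit Defensive.
Import GRing.Theory.
Local Open Scope ring_scope.

(* The free (non-unital) K-algebra K<X>: elements are coefficient functions
   f : seq X -> K on words, with f [::] = 0 (no constant term, i.e. supported on
   the free semigroup X^+) and finite support. *)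
Section FreeAlg.
Variables (K : idomainType) (X : Type).

Definition isFA (f : seq X -> K) : Prop :=
  f [::] = 0 /\ exists s : seq (seq X), forall w, f w <> 0 -> List.In w s.

Definition fa_zero : seq X -> K := fun _ => 0.
Definition fa_add (f g : seq X -> K) : seq X -> K := fun w => f w + g w.
Definition fa_scale (c : K) (f : seq X -> K) : seq X -> K := fun w => c * f w.
Definition fa_mul (f g : seq X -> K) : seq X -> K :=
  fun w => \sum_(1 <= i < size w) f (take i w) * g (drop i w).

Definition is_ideal (I : (seq X -> K) -> Prop) : Prop :=
  [/\ forall f, I f -> isFA f,
      I fa_zero,
      forall f g, I f -> I g -> I (fa_add f g),
      forall c f, I f -> I (fa_scale c f)
    & forall f g, isFA g -> I f -> I (fa_mul g f) /\ I (fa_mul f g)].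

End FreeAlg.

Definition fa_iso (K : idomainType) (X Y : Type)
  (I : (seq X -> K) -> Prop) (phi : (seq Y -> K) -> (seq X -> K)) : Prop :=
  [/\ forall f, isFA f -> I (phi f),
      forall g, I g -> exists2 f, isFA f & phi f = g,
      forall f1 f2, isFA f1 -> isFA f2 -> phi f1 = phi f2 -> f1 = f2
    & [/\ forall f1 f2, isFA f1 -> isFA f2 -> phi (fa_add f1 f2) = fa_add (phi f1) (phi f2),
      forall c f, isFA f -> phi (fa_scale c f) = fa_scale c (phi f)
    & forall f1 f2, isFA f1 -> isFA f2 -> phi (fa_mul f1 f2) = fa_mul (phi f1) (phi f2)]].

(* Main.v *)
Require Import Defs.
From HB Require Import structures.
From mathcomp Require Import all_boot all_order all_algebra.
From Stdlib Require Import Classical ClassicalEpsilon FunctionalExtensionality.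
From mathcomp Require Import zify.
Local Open Scope ring_scope.
Import GRing.Theory.

Lemma tri (R : nmodType) (F : nat -> nat -> R) n :
  \sum_(1 <= i < n) \sum_(i.+1 <= k < n) F i k = \sum_(1 <= k < n) \sum_(1 <= i < k) F i k.
Proof.
elim: n => [|n IH]; first by rewrite !big_geq.
case: n IH => [|n] IH; first by rewrite !big_geq.
rewrite big_nat_recr //= [in RHS]big_nat_recr //= -IH.
rewrite [X in _ + X]big_geq // addr0.
rewrite -big_split /=. apply: eq_big_nat => i /andP[_ hi]. by rewrite big_nat_recr.
Qed.

Section Help.
Variables (K : idomainType) (X : Type).
Implicit Types f g h : seq X -> K.

Lemma fa_assoc f g h w : fa_mul f (fa_mul g h) w = fa_mul (fa_mul f g) h w.
Proof.
rewrite /fa_mul.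
set n := size w.
transitivity (\sum_(1 <= i < n) \sum_(i.+1 <= k < n)
   f (take i w) * (g (drop i (take k w)) * h (drop k w))).
  apply: eq_big_nat => i /andP[hi1 hi2].
  rewrite mulr_sumr size_drop -/n.
  rewrite -[i.+1]add1n big_addn.
  apply: eq_big_nat => j /andP[hj1 hj2].
  by rewrite take_drop drop_drop.
rewrite tri.
apply: eq_big_nat => k /andP[hk1 hk2].
rewrite mulr_suml size_take -/n hk2.
apply: eq_big_nat => i /andP[hi1 hi2].
by rewrite take_takel ?(ltnW hi2) // mulrA.
Qed.

Lemma sum_neq0 (n : nat) (F : nat -> K) :
  \sum_(1 <= i < n) F i != 0 -> exists i, (1 <= i < n)%N /\ F i != 0.
Proof.
move=> H; apply: NNPP => H'; move/negP: H; apply.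
rewrite big_nat_cond big1 // => i /andP[hi _].
case: (F i =P 0) => // /eqP hne; exfalso; apply: H'; by exists i.
Qed.

Lemma isFA_add f g : isFA f -> isFA g -> isFA (fa_add f g).
Proof.
move=> [f0 [s1 H1]] [g0 [s2 H2]]; split; first by rewrite /fa_add f0 g0 addr0.
exists (s1 ++ s2) => w hw; apply List.in_or_app.
case: (f w =P 0) => hf; last by left; apply: H1.
right; apply: H2 => hg; apply: hw; by rewrite /fa_add hf hg addr0.
Qed.

Lemma isFA_scale c f : isFA f -> isFA (fa_scale c f).
Proof.
move=> [f0 [s1 H1]]; split; first by rewrite /fa_scale f0 mulr0.
exists s1 => w hw; apply: H1 => hf; apply: hw; by rewrite /fa_scale hf mulr0.
Qed.

Lemma isFA_mul f g : isFA f -> isFA g -> isFA (fa_mul f g).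
Proof.
move=> [f0 [s1 H1]] [g0 [s2 H2]]; split; first by rewrite /fa_mul big_geq.
exists (List.flat_map (fun u => List.map (fun v => u ++ v) s2) s1) => w hw.
have /sum_neq0 [i [hi hne]] : fa_mul f g w != 0 by apply/eqP.
rewrite -(cat_take_drop i w).
apply List.in_flat_map; exists (take i w); split.
  by apply: H1 => h; move: hne; rewrite h mul0r eqxx.
apply List.in_map; apply: H2 => h; move: hne; by rewrite h mulr0 eqxx.
Qed.

Lemma mul_left1 h f w : (forall u, h u != 0 -> size u = 1%N) -> (2 <= size w)%N ->
  fa_mul h f w = h (take 1 w) * f (drop 1 w).
Proof.
move=> Hh hw; rewrite /fa_mul big_ltn; last by apply: leq_trans hw.
rewrite [X in _ + X]big1_seq ?addr0 // => i /andP[_]; rewrite mem_index_iota => /andP[hi1 hi2].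
case: (h (take i w) =P 0) => [->|/eqP hne]; first by rewrite mul0r.
by move: (Hh _ hne); rewrite size_take hi2 => e; move: hi1; rewrite e.
Qed.

Lemma mul_right1 h f w : (forall u, h u != 0 -> size u = 1%N) -> (2 <= size w)%N ->
  fa_mul f h w = f (take (size w).-1 w) * h (drop (size w).-1 w).
Proof.
move=> Hh hw; rewrite /fa_mul.
move: hw; case Hn: (size w) => [|m] //= hw.
rewrite big_nat_recr /=; last by move: hw; lia.
rewrite [X in X + _]big1_seq ?add0r // => i /andP[_]; rewrite mem_index_iota => /andP[hi1 hi2].
case: (h (drop i w) =P 0) => [->|/eqP hne]; first by rewrite mulr0.
move: (Hh _ hne); rewrite size_drop Hn => e2; move: hi2 e2; lia.
Qed.

Lemma isFA_sub f g : isFA f -> isFA g -> isFA (fun w => f w - g w).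
Proof.
move=> [f0 [s1 H1]] [g0 [s2 H2]]; split; first by rewrite f0 g0 subr0.
exists (s1 ++ s2) => w hw; apply List.in_or_app.
case: (f w =P 0) => hf; last by left; apply: H1.
right; apply: H2 => hg; apply: hw; by rewrite hf hg subr0.
Qed.
End Help.

Lemma max_supp (T : Type) (P : T -> Prop) (sz : T -> nat) s :
  (forall x, P x -> List.In x s) -> (exists x, P x) ->
  exists x, P x /\ forall y, P y -> (sz y <= sz x)%N.
Proof.
move=> Hs [x0 Px0].
suff [x [Px [_ Hx]]] : exists x, P x /\ List.In x s /\ forall y, P y -> List.In y s -> (sz y <= sz x)%N.
  by exists x; split => // y Py; apply: Hx => //; apply: Hs.
have : exists x, P x /\ List.In x s by exists x0; split => //; apply: Hs.
elim: s {Hs} => [|a s IH]; first by case=> x [_ []].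
case=> x [Px Inx].
case: (classic (exists x, P x /\ List.In x s)) => [/IH [x' [Px' [In' H']]]|hn].
  case: (classic (P a)) => Pa.
    case: (leqP (sz a) (sz x')) => hle.
      exists x'; split => //; split; first by right.
      by move=> y Py [<-|Iny] //; apply: H'.
    exists a; split => //; split; first by left.
    move=> y Py [<-|Iny] //; apply: leq_trans (H' _ Py Iny) (ltnW hle).
  exists x'; split => //; split; first by right.
  by move=> y Py [ey|Iny]; [subst; contradiction | apply: H'].
case: Inx => [ea|Inx]; last by exfalso; apply: hn; exists x.
subst; exists x; split => //; split; first by left.
by move=> y Py [<-|Iny] //; exfalso; apply: hn; exists y.
Qed.

Lemma cancel_lemma (K : idomainType) (X : Type) (a d : seq X -> K) c :
  isFA a -> isFA d -> (exists v, a v != 0) ->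
  (forall w, fa_mul d a w = c * a w) -> forall w, d w = 0.
Proof.
move=> [a0 [sa Ha]] [d0 [sd Hd]] anz E w0; case: (d w0 =P 0) => // /eqP dnz.
have [u [du Hu]] := @max_supp _ (fun u => is_true (d u != 0)) (@size X) sd (fun x h => Hd x (elimN eqP h)) (ex_intro _ w0 dnz).
have [v [av Hv]] := @max_supp _ (fun u => is_true (a u != 0)) (@size X) sa (fun x h => Ha x (elimN eqP h)) anz.
have su : (0 < size u)%N by case: u du Hu => //; rewrite d0 eqxx.
have sv : (0 < size v)%N by case: v av Hv => //; rewrite a0 eqxx.
have := E (u ++ v).
have -> : a (u ++ v) = 0.
  case: (a (u ++ v) =P 0) => // /eqP h; move: (Hv _ h); rewrite size_cat; lia.
rewrite mulr0 /fa_mul (bigD1_seq (size u)) /=; last exact: iota_uniq.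
  2: by rewrite mem_index_iota size_cat; lia.
rewrite big1_seq ?addr0.
  rewrite take_size_cat // drop_size_cat // => e; move: (mulf_neq0 du av); by rewrite e eqxx.
move=> i /andP[hi]; rewrite mem_index_iota size_cat => /andP[hi1 hi2].
case: (ltnP i (size u)) => hiu.
  case: (a (drop i (u ++ v)) =P 0) => [->|/eqP h]; first by rewrite mulr0.
  move: (Hv _ h); rewrite size_drop size_cat; lia.
case: (d (take i (u ++ v)) =P 0) => [->|/eqP h]; first by rewrite mul0r.
move: (Hu _ h); rewrite size_take size_cat; move: hi; case: ltnP; lia.
Qed.

Theorem lemma6p4 (K : idomainType) (X : Type) (I : (seq X -> K) -> Prop) :
  is_ideal I ->
  (exists f, I f /\ f <> @fa_zero K X) ->
  (exists g, isFA g /\ ~ I g) ->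
  ~ (exists (Y : Type) (phi : (seq Y -> K) -> (seq X -> K)), fa_iso I phi).
Proof.
move=> [Isub I0 Iadd Iscale Imul] [f0 [If0 f0nz]] [g [gFA gnI]] [Y [phi [Pin Psurj Pinj [Padd Pscale Pmul]]]].
have zFA : forall Z, isFA (@fa_zero K Z) by move=> Z; split => //; exists [::].
have phi0 : phi (@fa_zero K Y) = @fa_zero K X.
  have e := Padd _ _ (zFA Y) (zFA Y).
  have ez : fa_add (@fa_zero K Y) (@fa_zero K Y) = @fa_zero K Y by apply: functional_extensionality => w; rewrite /fa_add /fa_zero addr0.
  rewrite ez in e.
  apply: functional_extensionality => w.
  have := congr1 (fun h => h w) e; rewrite /fa_add => e2.
  have := congr1 (fun x => x - phi (@fa_zero K Y) w) e2; rewrite addrK subrr => h; by rewrite -h.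
have [F FFA eF] := Psurj _ If0.
have [y _] : exists y : Y, True.
  apply: NNPP => hn; apply: f0nz; rewrite -eF -phi0; congr phi.
  apply: functional_extensionality => w; case: w => [|y' w]; first by case: FFA.
  by exfalso; apply: hn; exists y'.
pose d : seq Y -> K := fun w => if excluded_middle_informative (w = [:: y]) then 1 else 0.
have dy : d [:: y] = 1 by rewrite /d; case: excluded_middle_informative.
have dnz : forall u, d u != 0 -> u = [:: y].
  move=> u; rewrite /d; case: excluded_middle_informative => [h _|_] //=; by rewrite eqxx.
have d1 : forall u, d u != 0 -> size u = 1%N by move=> u /dnz ->.
have d0 : d [::] = 0 by case: (d [::] =P 0) => // /eqP /dnz.
have dFA : isFA d.
  split => //; exists [:: [:: y]] => w hw; left; symmetry; apply: dnz; exact/eqP.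
set a := phi d.
have Ia : I a := Pin _ dFA.
have anz : exists v, a v != 0.
  apply: NNPP => hn.
  have : a = phi (@fa_zero K Y).
    rewrite phi0; apply: functional_extensionality => w.
    by case: (a w =P 0) => // /eqP h; exfalso; apply: hn; exists w.
  move/(Pinj _ _ dFA (zFA Y)) => e; move: dy; rewrite e /fa_zero => /eqP; by rewrite eq_sym oner_eq0.
have [Iga Iag] := Imul a g gFA Ia.
have [S SFA eS] := Psurj _ Iga.
have [T TFA eT] := Psurj _ Iag.
have E : fa_mul d S = fa_mul T d.
  apply: Pinj; try apply: isFA_mul => //.
  rewrite !Pmul // eS eT -/a; apply: functional_extensionality => w; exact: fa_assoc.
pose c := T [:: y].
pose Q : seq Y -> K := fun u => if u is [::] then 0 else T (y :: u).
have QFA : isFA Q.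
  case: TFA => T0 [sT HT]; split => //; exists (List.map behead sT) => u.
  case: u => [|z u] //= hq; by apply: (List.in_map behead _ (y :: z :: u)); apply: HT.
have ES : forall v, S v = fa_mul d S (y :: v).
  case=> [|z v]; first by case: SFA => -> _; rewrite /fa_mul big_geq.
  by rewrite mul_left1 //= dy mul1r.
have eS2 : S = fa_add (fa_scale c d) (fa_mul Q d).
  apply: functional_extensionality => w; rewrite /fa_add /fa_scale.
  case: w => [|z w]; first by rewrite d0 mulr0 /fa_mul big_geq // add0r; case: SFA.
  case: w => [|z' w].
    rewrite /fa_mul [X in _ + X]big_geq // addr0 ES E mul_right1 //=.
  rewrite ES E mul_right1 //= mul_right1 //=.
  have -> : d [:: z, z' & w] = 0 by case: (d [:: z, z' & w] =P 0) => // /eqP /d1 /eqP.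
  by rewrite mulr0 add0r.
have Ib : I (phi Q) := Pin _ QFA.
have egb : forall w, fa_mul g a w = c * a w + fa_mul (phi Q) a w.
  move=> w; rewrite -eS eS2 Padd ?Pscale ?Pmul //; [exact: isFA_scale | exact: isFA_mul].
have bFA := Isub _ Ib.
have hd := @cancel_lemma K X a (fun w => g w - phi Q w) c (Isub _ Ia) (@isFA_sub K X g (phi Q) gFA bFA) anz.
apply: gnI.
have -> : g = phi Q.
  apply: functional_extensionality => w; apply/eqP; rewrite -subr_eq0; apply/eqP; apply: hd => v.
  have -> : fa_mul (fun w => g w - phi Q w) a v = fa_mul g a v - fa_mul (phi Q) a v.
    by rewrite /fa_mul -sumrB; apply: eq_bigr => i _; rewrite mulrBl.
  by rewrite egb addrK.
by [].
Qed.
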